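(* Let $(\gamma,\nu):I\to\mathbb{R}^2\times S^1$ be a Legendre curve with curvature $(\ell,\beta)$, $\gamma=(x,z)$, $\nu=(a,b)$, and $\lambda\neq0$ a constant; for a plane curve $\eta=(X,Z)$ on $I$ write $r[\eta](u,v)=(X(u)\cos v,X(u)\sin v,Z(u)+\lambda v)$. Let $(k_1,k_2):I\to\mathbb{R}^2$ be smooth with $k_1^2+k_2^2=1$ and $-k_1x+k_2b\lambda=0$, let $\tilde t\neq0$, and let $$r[\gamma]^{\tilde t}(u,v)=\big((x+\tilde tk_2a)\cos v+\tilde tk_1\sin v,\ (x+\tilde tk_2a)\sin v-\tilde tk_1\cos v,\ z+\lambda v+\tilde tk_2b\big)$$ (the parallel surface of $r[\gamma]$ along $\mathbf n=(k_2a\cos v+k_1\sin v,k_2a\sin v-k_1\cos v,k_2b)$). Suppose $A,\theta:I\to\mathbb{R}$ are smooth with $x+\tilde tk_2a=A\cos\theta$, $\tilde tk_1=A\sin\theta$. Let $(\ell_1,\ell_2):I\to\mathbb{R}^2$ be smooth with $\ell_1^2+\ell_2^2=1$ and $\ell_1b\lambda+\ell_2xa=0$, let $t\ne0$, and suppose $B,\tau:I\to\mathbb{R}$ are smooth with $x-t\ell_1=B\cos\tau$, $-t\ell_2=B\sin\tau$. Put $\tilde\gamma(u)=(B(u),z(u)-\lambda\tau(u))$. If $r[\gamma]^{\tilde t}(u,v)=r[\tilde\gamma](u,v)$ for all $(u,v)\in I\times\mathbb{R}$, then $x$ is constant and $\gamma$ is a part of a line.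
   Context: A Legendre curve is a smooth $(\gamma,\nu):I\to\mathbb{R}^2\times S^1$ with $\dot\gamma\cdot\nu=0$; with $\mu=J\nu$ ($J$ anticlockwise rotation by $\pi/2$) its curvature is $(\ell,\beta)$, $\ell=\dot\nu\cdot\mu$, $\beta=\dot\gamma\cdot\mu$, so that $\dot x=-\beta b$, $\dot z=\beta a$, $\dot a=-\ell b$, $\dot b=\ell a$, $a^2+b^2=1$. (Here $B,\tau$ are such that $s+t\nu^s$ is the slice curve of $r[\tilde\gamma]$, where $s=(x\cos\frac z\lambda,-x\sin\frac z\lambda)$ and $\nu^s=(-\ell_2\sin\frac z\lambda-\ell_1\cos\frac z\lambda,-\ell_2\cos\frac z\lambda+\ell_1\sin\frac z\lambda)$.) *)

(* Defs.v *)
From Stdlib Require Import Reals.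
From Coquelicot Require Import Coquelicot.
Open Scope R_scope.

Definition in_interval (lo hi : Rbar) (u : R) : Prop :=
  Rbar_lt lo u /\ Rbar_lt u hi.

Definition smooth_on (lo hi : Rbar) (f : R -> R) : Prop :=
  forall (n : nat) (u : R), in_interval lo hi u -> ex_derive (Derive_n f n) u.

Definition legendre_curve (lo hi : Rbar) (x z a b : R -> R) : Prop :=
  smooth_on lo hi x /\ smooth_on lo hi z /\
  smooth_on lo hi a /\ smooth_on lo hi b /\
  (forall u, in_interval lo hi u ->
     a u ^ 2 + b u ^ 2 = 1 /\ Derive x u * a u + Derive z u * b u = 0).

Definition helicoidal (lambda : R) (X Z : R -> R) (u v : R) : R * R * R :=
  (X u * cos v, X u * sin v, Z u + lambda * v).

Definition parallel_surface (lambda tt : R) (x z a b k1 k2 : R -> R)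
    (u v : R) : R * R * R :=
  ((x u + tt * k2 u * a u) * cos v + tt * k1 u * sin v,
   (x u + tt * k2 u * a u) * sin v - tt * k1 u * cos v,
   z u + lambda * v + tt * k2 u * b u).

Definition part_of_line (lo hi : Rbar) (x z : R -> R) : Prop :=
  exists p1 p2 d1 d2 : R, (d1 <> 0 \/ d2 <> 0) /\
    forall u, in_interval lo hi u ->
      exists s : R, x u = p1 + s * d1 /\ z u = p2 + s * d2.

(* Main.v *)
Require Import Defs.
From Stdlib Require Import Reals Lra Classical.
From Coquelicot Require Import Coquelicot.
Open Scope R_scope.

Lemma interval_conv (lo hi : Rbar) (u1 u2 w : R) :
  in_interval lo hi u1 -> in_interval lo hi u2 ->
  Rmin u1 u2 <= w <= Rmax u1 u2 -> in_interval lo hi w.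
Proof.
  intros H1 H2 [Hw1 Hw2].
  assert (Hm : in_interval lo hi (Rmin u1 u2)).
  { unfold Rmin; destruct (Rle_dec u1 u2); assumption. }
  assert (HM : in_interval lo hi (Rmax u1 u2)).
  { unfold Rmax; destruct (Rle_dec u1 u2); assumption. }
  split.
  - apply Rbar_lt_le_trans with (Finite (Rmin u1 u2)). apply Hm. simpl; lra.
  - apply Rbar_le_lt_trans with (Finite (Rmax u1 u2)). simpl; lra. apply HM.
Qed.

Lemma const_of_deriv0 (lo hi : Rbar) (x : R -> R) :
  (forall u, in_interval lo hi u -> ex_derive x u /\ Derive x u = 0) ->
  exists c : R, forall u, in_interval lo hi u -> x u = c.
Proof.
  intros H.
  destruct (classic (exists u0, in_interval lo hi u0)) as [[u0 Hu0]|Hn].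
  2:{ exists 0. intros u Hu. exfalso. apply Hn. exists u. exact Hu. }
  exists (x u0). intros u Hu.
  destruct (MVT_gen x u0 u (fun _ => 0)) as [c [_ Hc]].
  - intros w Hw. assert (Hi : in_interval lo hi w)
      by (apply (interval_conv lo hi u0 u); auto; lra).
    destruct (H w Hi) as [Hd H0]. rewrite <- H0. apply Derive_correct. exact Hd.
  - intros w Hw. assert (Hi : in_interval lo hi w)
      by (apply (interval_conv lo hi u0 u); auto; lra).
    destruct (H w Hi) as [Hd H0]. apply continuity_pt_filterlim.
    apply (ex_derive_continuous x w Hd).
  - lra.
Qed.

Theorem proposition3p6
  (lo hi : Rbar) (x z a b : R -> R) (lambda : R)
  (k1 k2 : R -> R) (tt : R) (A theta : R -> R)
  (l1 l2 : R -> R) (t : R) (B tau : R -> R) :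
  Rbar_lt lo hi ->
  legendre_curve lo hi x z a b ->
  lambda <> 0 ->
  smooth_on lo hi k1 -> smooth_on lo hi k2 ->
  (forall u, in_interval lo hi u ->
     k1 u ^ 2 + k2 u ^ 2 = 1 /\ - k1 u * x u + k2 u * b u * lambda = 0) ->
  tt <> 0 ->
  smooth_on lo hi A -> smooth_on lo hi theta ->
  (forall u, in_interval lo hi u ->
     x u + tt * k2 u * a u = A u * cos (theta u) /\
     tt * k1 u = A u * sin (theta u)) ->
  smooth_on lo hi l1 -> smooth_on lo hi l2 ->
  (forall u, in_interval lo hi u ->
     l1 u ^ 2 + l2 u ^ 2 = 1 /\ l1 u * b u * lambda + l2 u * x u * a u = 0) ->
  t <> 0 ->
  smooth_on lo hi B -> smooth_on lo hi tau ->
  (forall u, in_interval lo hi u ->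
     x u - t * l1 u = B u * cos (tau u) /\ - t * l2 u = B u * sin (tau u)) ->
  (forall u v, in_interval lo hi u ->
     parallel_surface lambda tt x z a b k1 k2 u v =
     helicoidal lambda B (fun w => z w - lambda * tau w) u v) ->
  (exists c : R, forall u, in_interval lo hi u -> x u = c) /\
  part_of_line lo hi x z.
Proof.
  intros Hlh [Hx [Hz [Ha [Hb Hleg]]]] Hlam _ _ Hk Htt _ _ _ _ _ _ _ _ _ _ Hsurf.
  assert (Hc : exists c : R, forall u, in_interval lo hi u -> x u = c).
  { apply const_of_deriv0. intros u Hu. split.
    - exact (Hx 0%nat u Hu).
    - pose proof (Hsurf u 0 Hu) as E. unfold parallel_surface, helicoidal in E.
      rewrite cos_0, sin_0 in E. injection E as E1 E2 E3.
      assert (Hk1 : k1 u = 0).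
      { assert (tt * k1 u = 0) by lra.
        destruct (Rmult_integral _ _ H); [contradiction|assumption]. }
      destruct (Hk u Hu) as [Hk2 Hkb]. rewrite Hk1 in Hk2, Hkb.
      assert (Hb0 : b u = 0).
      { assert (k2 u <> 0) by (intro h; rewrite h in Hk2; lra).
        assert (k2 u * b u * lambda = 0) by lra.
        destruct (Rmult_integral _ _ H0) as [h|h]; [|contradiction].
        destruct (Rmult_integral _ _ h); [contradiction|assumption]. }
      destruct (Hleg u Hu) as [Hab Hd]. rewrite Hb0 in Hab, Hd.
      assert (a u <> 0) by (intro h; rewrite h in Hab; lra).
      assert (Derive x u * a u = 0) by lra.
      destruct (Rmult_integral _ _ H0); [assumption|contradiction]. }
  split; [exact Hc|].
  destruct Hc as [c Hc].
  exists c, 0, 0, 1. split; [right; lra|].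
  intros u Hu. exists (z u). split; [rewrite (Hc u Hu)|]; ring.
Qed.
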